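(* If $X$ and $Y$ are homotopy equivalent spaces, then the subspaces $\mathbf{w}(X)$ and $\mathbf{w}(Y)$ are homotopy equivalent, and the subspaces $\mathbf{aw}(X)$ and $\mathbf{aw}(Y)$ are homotopy equivalent.
   Context: A loop is trivial if path-homotopic to a constant loop. A sequence of loops $\alpha_n$ based at $x$ is a null-sequence if every neighborhood of $x$ contains $\alpha_n([0,1])$ for all but finitely many $n$. $\mathbf{aw}(X)=\{x\in X\mid \text{there is a null-sequence of non-trivial loops based at }x\}$ (with subspace topology). $\mathbf{w}(X)$ is the subspace of points $x$ at which $X$ is not semilocally simply connected, i.e. every neighborhood of $x$ contains a loop based at $x$ that is non-trivial in $X$. *)

(* Defs.v *)
From Stdlib Require Import Reals.
Open Scope R_scope.

Record Top := {
  pt :> Type;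
  is_open : (pt -> Prop) -> Prop;
  open_full : is_open (fun _ => True);
  open_inter : forall U V, is_open U -> is_open V -> is_open (fun x => U x /\ V x);
  open_union : forall F : (pt -> Prop) -> Prop,
      (forall U, F U -> is_open U) -> is_open (fun x => exists U, F U /\ U x)
}.

Definition continuous {A B : Type} (oA : (A -> Prop) -> Prop) (oB : (B -> Prop) -> Prop)
  (f : A -> B) : Prop :=
  forall V, oB V -> oA (fun a => V (f a)).

Definition prod_open {A B : Type} (oA : (A -> Prop) -> Prop) (oB : (B -> Prop) -> Prop)
  (W : A * B -> Prop) : Prop :=
  forall p, W p -> exists U V, oA U /\ oB V /\ U (fst p) /\ V (snd p) /\
    forall q, U (fst q) -> V (snd q) -> W q.

Definition R_open (U : R -> Prop) : Prop :=
  forall x, U x -> exists eps, 0 < eps /\ forall y, Rabs (y - x) < eps -> U y.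

Definition I := { t : R | 0 <= t <= 1 }.
Definition I_open (V : I -> Prop) : Prop :=
  exists U, R_open U /\ forall t : I, V t <-> U (proj1_sig t).
Definition I0 : I := exist _ 0 (conj (Rle_refl 0) Rle_0_1).
Definition I1 : I := exist _ 1 (conj Rle_0_1 (Rle_refl 1)).

Definition sub_open (X : Top) (P : X -> Prop) (V : {x : X | P x} -> Prop) : Prop :=
  exists U, is_open X U /\ forall y : {x : X | P x}, V y <-> U (proj1_sig y).

Lemma sub_open_full (X : Top) (P : X -> Prop) : sub_open X P (fun _ => True).
Proof. exists (fun _ => True); split; [apply open_full | tauto]. Qed.

Lemma sub_open_inter (X : Top) (P : X -> Prop) U V :
  sub_open X P U -> sub_open X P V -> sub_open X P (fun x => U x /\ V x).
Proof.
  intros [U' [HU HU']] [V' [HV HV']].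
  exists (fun x => U' x /\ V' x); split; [now apply open_inter|].
  intro y; rewrite HU', HV'; tauto.
Qed.

Lemma sub_open_union (X : Top) (P : X -> Prop) (F : ({x : X | P x} -> Prop) -> Prop) :
  (forall U, F U -> sub_open X P U) ->
  sub_open X P (fun x => exists U, F U /\ U x).
Proof.
  intros HF.
  exists (fun x => exists U, (is_open X U /\
            forall y : {x : X | P x}, U (proj1_sig y) -> exists V, F V /\ V y) /\ U x).
  split.
  - apply open_union. intros U [HU _]; exact HU.
  - intro y; split.
    + intros [V [HV Vy]]. destruct (HF V HV) as [U [HU HU']].
      exists U; split; [split; [exact HU|]|].
      * intros z Uz; exists V; split; [exact HV| now apply HU'].
      * now apply HU'.
    + intros [U [[_ HU] Uy]]. now apply HU.
Qed.

Definition subspace (X : Top) (P : X -> Prop) : Top := {|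
  pt := {x : X | P x};
  is_open := sub_open X P;
  open_full := sub_open_full X P;
  open_inter := sub_open_inter X P;
  open_union := sub_open_union X P
|}.

Definition homotopic (X Y : Top) (f g : X -> Y) : Prop :=
  exists H : X * I -> Y,
    continuous (prod_open (is_open X) I_open) (is_open Y) H /\
    (forall x, H (x, I0) = f x) /\ (forall x, H (x, I1) = g x).

Definition homotopy_equivalent (X Y : Top) : Prop :=
  exists (f : X -> Y) (g : Y -> X),
    continuous (is_open X) (is_open Y) f /\
    continuous (is_open Y) (is_open X) g /\
    homotopic X X (fun x => g (f x)) (fun x => x) /\
    homotopic Y Y (fun y => f (g y)) (fun y => y).

Definition loop (X : Top) (x : X) (a : I -> X) : Prop :=
  continuous I_open (is_open X) a /\ a I0 = x /\ a I1 = x.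

Definition trivial_loop (X : Top) (x : X) (a : I -> X) : Prop :=
  exists H : I * I -> X,
    continuous (prod_open I_open I_open) (is_open X) H /\
    (forall s, H (s, I0) = a s) /\ (forall s, H (s, I1) = x) /\
    (forall t, H (I0, t) = x /\ H (I1, t) = x).

(** w(X): points at which X is not semilocally simply connected. *)
Definition w_set (X : Top) (x : X) : Prop :=
  forall U, is_open X U -> U x ->
    exists a, loop X x a /\ ~ trivial_loop X x a /\ forall s, U (a s).

Definition aw_set (X : Top) (x : X) : Prop :=
  exists a : nat -> I -> X,
    (forall n, loop X x (a n) /\ ~ trivial_loop X x (a n)) /\
    (forall U, is_open X U -> U x ->
       exists N, forall n, (N <= n)%nat -> forall s, U (a n s)).

Definition w (X : Top) : Top := subspace X (w_set X).
Definition aw (X : Top) : Top := subspace X (aw_set X).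

(* Main.v *)
Require Import Defs.
From Stdlib Require Import Reals Lra Psatz.
From Stdlib Require Import ProofIrrelevance FunctionalExtensionality PropExtensionality Classical.
Open Scope R_scope.

Definition sv (t : I) : R := proj1_sig t.
Lemma sv_bnd t : 0 <= sv t <= 1. Proof. exact (proj2_sig t). Qed.
Lemma I_eq (t1 t2 : I) : sv t1 = sv t2 -> t1 = t2.
Proof. destruct t1 as [x hx], t2 as [y hy]; unfold sv; simpl; intros ->. f_equal; apply proof_irrelevance. Qed.
Lemma sig_eq {A} (P : A -> Prop) (u v : {x | P x}) : proj1_sig u = proj1_sig v -> u = v.
Proof. destruct u, v; simpl; intros ->; f_equal; apply proof_irrelevance. Qed.
Lemma sv_I0 : sv I0 = 0. Proof. reflexivity. Qed.
Lemma sv_I1 : sv I1 = 1. Proof. reflexivity. Qed.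

Definition clampR x := Rmax 0 (Rmin 1 x).
Lemma clampR_bnd x : 0 <= clampR x <= 1.
Proof. unfold clampR. split; [apply Rmax_l|]. apply Rmax_lub; [lra| apply Rmin_l]. Qed.
Definition cl (x : R) : I := exist _ (clampR x) (clampR_bnd x).
Lemma sv_cl x : sv (cl x) = clampR x. Proof. reflexivity. Qed.

Lemma Rmin_spec a b : (a <= b /\ Rmin a b = a) \/ (b <= a /\ Rmin a b = b).
Proof. unfold Rmin; destruct (Rle_dec a b); [left|right]; split; auto; lra. Qed.
Lemma Rmax_spec a b : (a <= b /\ Rmax a b = b) \/ (b <= a /\ Rmax a b = a).
Proof. unfold Rmax; destruct (Rle_dec a b); [left|right]; split; auto; lra. Qed.

Ltac mm := unfold clampR in *; repeat match goal with
 | |- context [Rmin ?a ?b] => let h := fresh "h" in let e := fresh "e" in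
     destruct (Rmin_spec a b) as [[h e]|[h e]]; rewrite e in *; clear e
 | |- context [Rmax ?a ?b] => let h := fresh "h" in let e := fresh "e" in
     destruct (Rmax_spec a b) as [[h e]|[h e]]; rewrite e in *; clear e
 | H : context [Rmin ?a ?b] |- _ => let h := fresh "h" in let e := fresh "e" in
     destruct (Rmin_spec a b) as [[h e]|[h e]]; rewrite e in *; clear e
 | H : context [Rmax ?a ?b] |- _ => let h := fresh "h" in let e := fresh "e" in
     destruct (Rmax_spec a b) as [[h e]|[h e]]; rewrite e in *; clear e
 end.

Lemma lt_min_l x a b : x < Rmin a b -> x < a.
Proof. intro h; eapply Rlt_le_trans; [exact h| apply Rmin_l]. Qed.
Lemma lt_min_r x a b : x < Rmin a b -> x < b.
Proof. intro h; eapply Rlt_le_trans; [exact h| apply Rmin_r]. Qed.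

Notation PO := (prod_open I_open I_open).
Definition ps (p : I*I) := sv (fst p).
Definition pu (p : I*I) := sv (snd p).

Lemma R_open_ball c d : R_open (fun y => Rabs (y - c) < d).
Proof. intros x hx. exists (d - Rabs (x - c)). split; [lra|]. intros y hy.
  pose proof (Rabs_triang (y - x) (x - c)) as h. replace (y - x + (x - c)) with (y - c) in h by ring. lra. Qed.
Lemma I_open_ball c d : I_open (fun t => Rabs (sv t - c) < d).
Proof. exists (fun y => Rabs (y - c) < d); split; [apply R_open_ball| intro; split; intro h; exact h]. Qed.
Lemma I_open_full : I_open (fun _ => True).
Proof. exists (fun _ => True). split; [intros x _; exists 1; split; [lra|auto] | tauto]. Qed.
Lemma I_open_inter A B : I_open A -> I_open B -> I_open (fun t => A t /\ B t).
Proof. intros [A' [hA eA]] [B' [hB eB]]. exists (fun y => A' y /\ B' y). split.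
 - intros x [ha hb]. destruct (hA x ha) as [e1 [he1 h1]]. destruct (hB x hb) as [e2 [he2 h2]].
   exists (Rmin e1 e2). split; [apply Rmin_glb_lt; auto|]. intros y hy. split;
   [apply h1; exact (lt_min_l _ _ _ hy)|apply h2; exact (lt_min_r _ _ _ hy)].
 - intro t; rewrite eA, eB; tauto. Qed.

Lemma PO_box (W : I*I -> Prop) p U1 V1 d : I_open U1 -> I_open V1 -> U1 (fst p) -> V1 (snd p) -> 0 < d ->
 (forall q, U1 (fst q) -> V1 (snd q) -> Rabs (ps q - ps p) < d -> Rabs (pu q - pu p) < d -> W q) ->
 exists U V, I_open U /\ I_open V /\ U (fst p) /\ V (snd p) /\ forall q, U (fst q) -> V (snd q) -> W q.
Proof. intros hU hV hu hv hd hW.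
 exists (fun t => U1 t /\ Rabs (sv t - ps p) < d), (fun t => V1 t /\ Rabs (sv t - pu p) < d).
 split; [apply I_open_inter; auto; apply I_open_ball|].
 split; [apply I_open_inter; auto; apply I_open_ball|].
 split; [split; auto; unfold ps; rewrite Rminus_diag, Rabs_R0; auto|].
 split; [split; auto; unfold pu; rewrite Rminus_diag, Rabs_R0; auto|].
 intros q [a b] [c e]; apply hW; auto. Qed.

Lemma cont_comp {A B C} oA oB oC (f : A -> B) (g : B -> C) :
  continuous oA oB f -> continuous oB oC g -> continuous oA oC (fun x => g (f x)).
Proof. intros hf hg V hV. exact (hf _ (hg V hV)). Qed.

Lemma pair_cont {A B} oA oB (f : I*I -> A) (g : I*I -> B) :
  continuous PO oA f -> continuous PO oB g -> continuous PO (prod_open oA oB) (fun p => (f p, g p)).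
Proof. intros hf hg W hW p hp. destruct (hW _ hp) as [U [V [hU [hV [hUf [hVg hUV]]]]]]. simpl in *.
 destruct (hf U hU p hUf) as [U1 [V1 [? [? [? [? h1]]]]]].
 destruct (hg V hV p hVg) as [U2 [V2 [? [? [? [? h2]]]]]].
 exists (fun t => U1 t /\ U2 t), (fun t => V1 t /\ V2 t). repeat split; try apply I_open_inter; auto.
 intros q [] []. apply (hUV (f q, g q)); simpl; [apply h1|apply h2]; auto. Qed.

Lemma fst_cont : continuous PO I_open (@fst I I).
Proof. intros V hV p hp. exists V, (fun _ => True). repeat split; auto; apply I_open_full. Qed.


Definition cR (f : I*I -> R) := forall p e, 0 < e -> exists d, 0 < d /\ forall q,
  Rabs (ps q - ps p) < d -> Rabs (pu q - pu p) < d -> Rabs (f q - f p) < e.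

Ltac unabs := repeat match goal with H : Rabs _ < _ |- _ => apply Rabs_def2 in H; destruct H end; apply Rabs_def1.

Lemma cR_I (phi : I*I -> I) : cR (fun p => sv (phi p)) -> continuous PO I_open phi.
Proof. intros hc V [U' [hU' eV]] p hp. apply eV in hp. destruct (hU' _ hp) as [e [he hball]].
 destruct (hc p e he) as [d [hd hq]].
 apply (PO_box _ p (fun _ => True) (fun _ => True) d); auto using I_open_full.
 intros q _ _ h1 h2. apply eV. apply hball. apply hq; auto. Qed.

Lemma cR_ps : cR ps.
Proof. intros p e he. exists e; split; auto. Qed.
Lemma cR_pu : cR pu.
Proof. intros p e he. exists e; split; auto. Qed.
Lemma cR_const c : cR (fun _ => c).
Proof. intros p e he. exists 1; split; [lra|]. intros. rewrite Rminus_diag, Rabs_R0; auto. Qed.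

Lemma cR_bin (op : R -> R -> R) (f g : I*I -> R) :
  (forall a b a' b' e, Rabs (a' - a) < e -> Rabs (b' - b) < e -> Rabs (op a' b' - op a b) < e + e) ->
  cR f -> cR g -> cR (fun p => op (f p) (g p)).
Proof. intros hop hf hg p e he.
 destruct (hf p (e/2)) as [d1 [hd1 h1]]; [lra|]. destruct (hg p (e/2)) as [d2 [hd2 h2]]; [lra|].
 exists (Rmin d1 d2). split; [apply Rmin_glb_lt; auto|]. intros q hs hu.
 pose proof (lt_min_l _ _ _ hs); pose proof (lt_min_r _ _ _ hs);
 pose proof (lt_min_l _ _ _ hu); pose proof (lt_min_r _ _ _ hu).
 replace e with (e/2 + e/2) by field. apply hop; auto. Qed.

Lemma cR_plus f g : cR f -> cR g -> cR (fun p => f p + g p).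
Proof. apply (cR_bin Rplus). intros; unabs; lra. Qed.
Lemma cR_minus f g : cR f -> cR g -> cR (fun p => f p - g p).
Proof. apply (cR_bin Rminus). intros; unabs; lra. Qed.
Lemma cR_min f g : cR f -> cR g -> cR (fun p => Rmin (f p) (g p)).
Proof. apply (cR_bin Rmin). intros; unabs; mm; lra. Qed.
Lemma cR_max f g : cR f -> cR g -> cR (fun p => Rmax (f p) (g p)).
Proof. apply (cR_bin Rmax). intros; unabs; mm; lra. Qed.
Lemma cR_clamp f : cR f -> cR (fun p => clampR (f p)).
Proof. intros h. unfold clampR. apply (cR_max (fun _ => 0) (fun p => Rmin 1 (f p))); [apply cR_const|].
 apply (cR_min (fun _ => 1) f); auto; apply cR_const. Qed.
Lemma cR_scal c f : cR f -> cR (fun p => c * f p).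
Proof. intros hf p e he. set (k := Rabs c). assert (hk : 0 <= k) by apply Rabs_pos.
 destruct (hf p (e / (k + 1))) as [d [hd h]]. { apply Rdiv_lt_0_compat; lra. }
 exists d; split; auto. intros q h1 h2. specialize (h q h1 h2).
 rewrite <- Rmult_minus_distr_l, Rabs_mult. fold k.
 assert (e / (k + 1) * (k + 1) = e) by (field; lra).
 set (r := Rabs (f q - f p)) in *. set (m := e / (k+1)) in *. assert (0 <= r) by apply Rabs_pos. nra. Qed.
Lemma cR_mult01 f g : (forall p, Rabs (f p) <= 1) -> (forall p, Rabs (g p) <= 1) -> cR f -> cR g ->
  cR (fun p => f p * g p).
Proof. intros bf bg hf hg p e he.
 destruct (hf p (e/2)) as [d1 [hd1 h1]]; [lra|]. destruct (hg p (e/2)) as [d2 [hd2 h2]]; [lra|].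
 exists (Rmin d1 d2). split; [apply Rmin_glb_lt; auto|]. intros q hs hu.
 pose proof (lt_min_l _ _ _ hs); pose proof (lt_min_r _ _ _ hs);
 pose proof (lt_min_l _ _ _ hu); pose proof (lt_min_r _ _ _ hu).
 specialize (h1 q ltac:(auto) ltac:(auto)). specialize (h2 q ltac:(auto) ltac:(auto)).
 replace (f q * g q - f p * g p) with (f q * (g q - g p) + g p * (f q - f p)) by ring.
 eapply Rle_lt_trans; [apply Rabs_triang|]. rewrite !Rabs_mult.
 pose proof (bf q). pose proof (bg p). pose proof (Rabs_pos (f q)). pose proof (Rabs_pos (g p)).
 pose proof (Rabs_pos (g q - g p)). pose proof (Rabs_pos (f q - f p)). nra. Qed.
Lemma paste (X : Top) (phi : I*I -> R) (F1 F2 : I*I -> X) :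
  cR phi -> continuous PO (is_open X) F1 -> continuous PO (is_open X) F2 ->
  (forall p, phi p = 0 -> F1 p = F2 p) ->
  continuous PO (is_open X) (fun p => if Rle_dec (phi p) 0 then F1 p else F2 p).
Proof.
 intros hc h1 h2 heq V hV p hp. revert hp.
 destruct (Rle_dec (phi p) 0) as [hle|hgt]; intro hp.
 - destruct (Rle_lt_or_eq_dec _ _ hle) as [hlt|he].
   + destruct (h1 V hV p hp) as [U1 [V1 [? [? [? [? hb]]]]]].
     destruct (hc p (- phi p)) as [d [hd hq]]; [lra|].
     apply (PO_box _ p U1 V1 d); auto. intros q hu hv hs ht.
     specialize (hq q hs ht). apply Rabs_def2 in hq.
     destruct (Rle_dec (phi q) 0); [apply hb; auto| lra].
   + pose proof (heq p he) as e.
     destruct (h1 V hV p hp) as [U1 [V1 [? [? [? [? hb1]]]]]].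
     rewrite e in hp. destruct (h2 V hV p hp) as [U2 [V2 [? [? [? [? hb2]]]]]].
     apply (PO_box _ p (fun t => U1 t /\ U2 t) (fun t => V1 t /\ V2 t) 1);
       try apply I_open_inter; auto; try lra.
     intros q [] [] _ _. destruct (Rle_dec (phi q) 0); [apply hb1|apply hb2]; auto.
 - destruct (h2 V hV p hp) as [U1 [V1 [? [? [? [? hb]]]]]].
   destruct (hc p (phi p)) as [d [hd hq]]; [lra|].
   apply (PO_box _ p U1 V1 d); auto. intros q hu hv hs ht.
   specialize (hq q hs ht). apply Rabs_def2 in hq.
   destruct (Rle_dec (phi q) 0); [lra| apply hb; auto].
Qed.

Definition vA (p : I*I) := Rmin (2 * pu p) 1.
Lemma vA_bnd p : 0 <= vA p <= 1.
Proof. unfold vA, pu. pose proof (sv_bnd (snd p)). mm; lra. Qed.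
Lemma cR_vA : cR vA.
Proof. unfold vA. apply (cR_min (fun p => 2 * pu p) (fun _ => 1)); [apply cR_scal, cR_pu|apply cR_const]. Qed.
Lemma cR_vAps : cR (fun p => vA p * ps p).
Proof. apply cR_mult01; [intro p; pose proof (vA_bnd p); rewrite Rabs_right; lra
  | intro p; unfold ps; pose proof (sv_bnd (fst p)); rewrite Rabs_right; lra | apply cR_vA | apply cR_ps]. Qed.

Ltac crt := lazymatch goal with
 | |- cR (fun p => sv (cl (@?f p))) => apply (cR_clamp f); crt
 | |- cR (fun p => clampR (@?f p)) => apply (cR_clamp f); crt
 | |- cR (fun p => vA p * ps p) => apply cR_vAps
 | |- cR (fun p => vA p) => apply cR_vA
 | |- cR (fun p => ps p) => apply cR_ps
 | |- cR (fun p => pu p) => apply cR_pu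
 | |- cR (fun p => @?f p - @?g p) => apply (cR_minus f g); crt
 | |- cR (fun p => @?f p + @?g p) => apply (cR_plus f g); crt
 | |- cR (fun p => Rmin (@?f p) (@?g p)) => apply (cR_min f g); crt
 | |- cR (fun p => Rmax (@?f p) (@?g p)) => apply (cR_max f g); crt
 | |- cR (fun p => ?c * @?f p) => apply (cR_scal c f); crt
 | |- cR (fun p => ?c) => apply cR_const
 | |- ?g => idtac
 end.

Definition Phi (X:Top) (H : X*I -> X) (t0:I) (a : I -> X) (G : I*I -> X) (p : I*I) : X :=
  if Rle_dec (pu p - 1/2) 0 then H (a (fst p), cl (1 - (1 - sv t0) * (2 * pu p)))
  else G (fst p, cl (2 * pu p - 1)).

Lemma Phi_cont (X:Top) H t0 a G :
  continuous (prod_open (is_open X) I_open) (is_open X) H ->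
  continuous I_open (is_open X) a -> continuous PO (is_open X) G ->
  (forall s, G (s, I0) = H (a s, t0)) ->
  continuous PO (is_open X) (Phi X H t0 a G).
Proof.
 intros cH ca cG G0. unfold Phi. apply paste.
 - crt.
 - apply (cont_comp PO (prod_open (is_open X) I_open) (is_open X)
     (fun p => (a (fst p), cl (1 - (1 - sv t0) * (2 * pu p)))) H); [|exact cH].
   apply pair_cont; [apply (cont_comp PO I_open _ fst a); [apply fst_cont|exact ca]|].
   apply cR_I; crt.
 - apply (cont_comp PO PO (is_open X) (fun p => (fst p, cl (2 * pu p - 1))) G); [|exact cG].
   apply pair_cont; [apply fst_cont|]. apply cR_I; crt.
 - intros p hp. assert (e : pu p = 1/2) by lra. rewrite e.
   rewrite (I_eq (cl (2 * (1/2) - 1)) I0).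
   2:{ rewrite sv_cl, sv_I0. mm; lra. }
   rewrite (I_eq (cl (1 - (1 - sv t0) * (2 * (1/2)))) t0).
   2:{ rewrite sv_cl. pose proof (sv_bnd t0). mm; lra. }
   symmetry; apply G0.
Qed.
Lemma Phi_bot (X:Top) H t0 a G q r : (forall z, H (z, I1) = z) -> sv r = 0 ->
  Phi X H t0 a G (q, r) = a q.
Proof. intros H1 hr. unfold Phi, pu; simpl. rewrite hr.
 destruct (Rle_dec (0 - 1/2) 0); [|lra].
 rewrite (I_eq (cl (1 - (1 - sv t0) * (2 * 0))) I1); [apply H1|].
 rewrite sv_cl, sv_I1. mm; lra. Qed.

Lemma Phi_center (X:Top) H t0 a G (x : X) q r : (forall s, G (s, I1) = H (x, t0)) -> sv r = 1 ->
  Phi X H t0 a G (q, r) = H (x, t0).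
Proof. intros G1 hr. unfold Phi, pu; simpl. rewrite hr.
 destruct (Rle_dec (1 - 1/2) 0); [lra|].
 rewrite (I_eq (cl (2 * 1 - 1)) I1); [apply G1|].
 rewrite sv_cl, sv_I1. mm; lra. Qed.

Lemma end_pt {A} (f : I -> A) y q : f I0 = y -> f I1 = y -> sv q = 0 \/ sv q = 1 -> f q = y.
Proof. intros h0 h1 [h|h]; [rewrite (I_eq q I0) | rewrite (I_eq q I1)]; auto. Qed.

Lemma Phi_seam (X:Top) H t0 a G (x : X) q1 q2 r : a I0 = x -> a I1 = x ->
  (forall t, G (I0, t) = H (x, t0) /\ G (I1, t) = H (x, t0)) ->
  (sv q1 = 0 \/ sv q1 = 1) -> (sv q2 = 0 \/ sv q2 = 1) ->
  Phi X H t0 a G (q1, r) = Phi X H t0 a G (q2, r).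
Proof. intros a0 a1 Gs h1 h2. unfold Phi; simpl. destruct (Rle_dec _ 0).
 - rewrite (end_pt a x q1), (end_pt a x q2); auto.
 - rewrite (end_pt (fun q => G (q, cl (2 * pu (q1, r) - 1))) (H (x,t0)) q1),
           (end_pt (fun q => G (q, cl (2 * pu (q2, r) - 1))) (H (x,t0)) q2); auto;
   apply Gs.
Qed.

Definition FA X H t0 a G (p : I*I) :=
  Phi X H t0 a G (cl (ps p + vA p * ps p + vA p * ps p - vA p), cl (Rmin (Rmin (3 * ps p) (3 - 3 * ps p)) (vA p))).
Definition FB X H t0 a G (p : I*I) :=
  Phi X H t0 a G (cl 0, cl (Rmin (Rmin (3 * ps p) (3 - 3 * ps p)) (2 - 2 * pu p))).
Definition Fh X H t0 a G (p : I*I) :=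
  if Rle_dec (pu p - 1/2) 0 then FA X H t0 a G p else FB X H t0 a G p.

Lemma T (X : Top) (H : X * I -> X) (t0 : I) :
  continuous (prod_open (is_open X) I_open) (is_open X) H -> (forall z, H (z, I1) = z) ->
  forall x a, loop X x a -> trivial_loop X (H (x, t0)) (fun s => H (a s, t0)) -> trivial_loop X x a.
Proof.
 intros cH H1 x a [ac [a0 a1]] [G [Gc [G0 [G1 Gs]]]]. simpl in G0.
 assert (cPhi := Phi_cont X H t0 a G cH ac Gc G0).
 exists (Fh X H t0 a G). split; [|split; [|split]].
 - unfold Fh. apply paste; [crt| | |].
   + unfold FA. apply (cont_comp PO PO (is_open X) (fun p => (cl (ps p + vA p * ps p + vA p * ps p - vA p), cl (Rmin (Rmin (3 * ps p) (3 - 3 * ps p)) (vA p)))) (Phi X H t0 a G)); [|exact cPhi].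
     apply pair_cont; apply cR_I; crt.
   + unfold FB. apply (cont_comp PO PO (is_open X) (fun p => (cl 0, cl (Rmin (Rmin (3 * ps p) (3 - 3 * ps p)) (2 - 2 * pu p)))) (Phi X H t0 a G)); [|exact cPhi].
     apply pair_cont; apply cR_I; crt.
   + intros p hp. assert (e : pu p = 1/2) by lra. unfold FA, FB, vA. rewrite e.
     pose proof (sv_bnd (fst p)) as hb. unfold ps in *.
     set (s := sv (fst p)) in *.
     rewrite (I_eq (cl (Rmin (Rmin (3 * s) (3 - 3 * s)) (Rmin (2 * (1 / 2)) 1)))
                   (cl (Rmin (Rmin (3 * s) (3 - 3 * s)) (2 - 2 * (1 / 2))))).
     2:{ rewrite !sv_cl. f_equal. f_equal. mm; lra. }
     destruct (Rle_dec s (1/3)).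
     * f_equal. f_equal. apply I_eq. rewrite !sv_cl. mm; first [reflexivity|lra|nra].
     * destruct (Rle_dec s (2/3)).
       -- rewrite (Phi_center X H t0 a G x); [|exact G1| rewrite sv_cl; mm; lra].
          rewrite (Phi_center X H t0 a G x); [|exact G1| rewrite sv_cl; mm; lra]. reflexivity.
       -- apply (Phi_seam X H t0 a G x); auto; rewrite sv_cl; mm; solve [left; lra | right; lra | left; nra | right; nra | lra | nra].
 - intro s. unfold Fh, FA, vA, pu, ps; simpl. try rewrite sv_I0.
   destruct (Rle_dec (0 - 1/2) 0); [|lra].
   pose proof (sv_bnd s).
   rewrite Phi_bot; auto; [|rewrite sv_cl; mm; lra].
   f_equal. apply I_eq. rewrite sv_cl. mm; first [reflexivity|lra|nra].
 - intro s. unfold Fh, FB, pu, ps; simpl. try rewrite sv_I1.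
   destruct (Rle_dec (1 - 1/2) 0); [lra|].
   pose proof (sv_bnd s).
   rewrite Phi_bot; auto; [|rewrite sv_cl; mm; lra].
   apply (end_pt a); auto. left; rewrite sv_cl; mm; lra.
 - intro t. pose proof (sv_bnd t). unfold Fh, FA, FB, vA, pu, ps; simpl. try rewrite sv_I0; try rewrite sv_I1.
   split; (destruct (Rle_dec (sv t - 1/2) 0);
     [rewrite Phi_bot; auto; [|rewrite sv_cl; mm; lra]; apply (end_pt a); auto; rewrite sv_cl; mm; lra
     |rewrite Phi_bot; auto; [|rewrite sv_cl; mm; lra]; apply (end_pt a); auto; rewrite sv_cl; mm; lra]).
Qed.

Lemma open_local (X:Top) (W : X -> Prop) :
  (forall z, W z -> exists U, is_open X U /\ U z /\ forall y, U y -> W y) -> is_open X W.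
Proof. intros hW.
 assert (E: W = (fun x => exists U, (is_open X U /\ forall y, U y -> W y) /\ U x)).
 { apply functional_extensionality; intro x; apply propositional_extensionality; split.
   - intro h. destruct (hW x h) as [U [hU [hx hy]]]. exists U; auto.
   - intros [U [[_ hy] hx]]. auto. }
 rewrite E. apply open_union. intros U [HU _]; exact HU. Qed.

Lemma sect_cont (X : Top) (t : I) :
  continuous (is_open X) (prod_open (is_open X) I_open) (fun z => (z, t)).
Proof. intros W hW. apply open_local. intros z hz.
 destruct (hW _ hz) as [U [V [hU [hV [hu [hv hb]]]]]]. simpl in *.
 exists U. split; [|split]; auto. Qed.

Definition pres (P : forall Z : Top, Z -> Prop) := forall (X Y : Top) (f : X -> Y) (g : Y -> X) (H : X * I -> X) (t0 : I),
  continuous (is_open X) (is_open Y) f -> continuous (is_open Y) (is_open X) g ->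
  continuous (prod_open (is_open X) I_open) (is_open X) H ->
  (forall z, H (z, I1) = z) -> (forall z, H (z, t0) = g (f z)) ->
  forall x, P X x -> P Y (f x).

Lemma transfer (X Y : Top) (f : X -> Y) (g : Y -> X) (H : X * I -> X) (t0 : I) :
  continuous (is_open X) (is_open Y) f -> continuous (is_open Y) (is_open X) g ->
  continuous (prod_open (is_open X) I_open) (is_open X) H ->
  (forall z, H (z, I1) = z) -> (forall z, H (z, t0) = g (f z)) ->
  forall x a, loop X x a -> ~ trivial_loop X x a ->
  loop Y (f x) (fun s => f (a s)) /\ ~ trivial_loop Y (f x) (fun s => f (a s)).
Proof.
 intros cf cg cH H1 Ht x a [ac [a0 a1]] ntr. split.
 - split; [apply (cont_comp _ (is_open X) _ a f); auto|]. simpl; rewrite a0, a1; auto.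
 - intros [K [Kc [K0 [K1 Ks]]]]. apply ntr. apply (T X H t0 cH H1 x a); [split; auto|].
   exists (fun p => g (K p)). split; [apply (cont_comp _ (is_open Y) _ K g); auto|].
   split; [intro s; rewrite K0, Ht; reflexivity|]. split; [intro s; rewrite K1, Ht; reflexivity|].
   intro t; destruct (Ks t) as [e1 e2]; rewrite e1, e2, Ht; auto.
Qed.

Lemma pres_w : pres w_set.
Proof.
 intros X Y f g H t0 cf cg cH H1 Ht x hx V hV hVx.
 destruct (hx (fun z => V (f z)) (cf V hV) hVx) as [a [la [ntr inU]]].
 destruct (transfer X Y f g H t0 cf cg cH H1 Ht x a la ntr) as [l2 n2].
 exists (fun s => f (a s)). auto.
Qed.

Lemma pres_aw : pres aw_set.
Proof.
 intros X Y f g H t0 cf cg cH H1 Ht x [a [ha hnull]].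
 exists (fun n s => f (a n s)). split.
 - intro n. destruct (ha n) as [la ntr]. exact (transfer X Y f g H t0 cf cg cH H1 Ht x (a n) la ntr).
 - intros V hV hVx. destruct (hnull (fun z => V (f z)) (cf V hV) hVx) as [N hN]. exists N; auto.
Qed.

Lemma sub_heq (P : forall Z : Top, Z -> Prop) (HP : pres P) (X Y : Top) :
  homotopy_equivalent X Y -> homotopy_equivalent (subspace X (P X)) (subspace Y (P Y)).
Proof.
 intros [f [g [cf [cg [[HX [cHX [HX0 HX1]]] [HY [cHY [HY0 HY1]]]]]]]].
 assert (fP : forall x, P X x -> P Y (f x)) by exact (HP X Y f g HX I0 cf cg cHX HX1 HX0).
 assert (gP : forall y, P Y y -> P X (g y)) by exact (HP Y X g f HY I0 cg cf cHY HY1 HY0).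
 assert (mX : forall x t, P X x -> P X (HX (x, t))).
 { intros x t hx. apply (HP X X (fun z => HX (z, t)) (fun z => z) HX t); auto.
   - apply (cont_comp _ (prod_open (is_open X) I_open) _ (fun z => (z, t)) HX); [apply sect_cont|exact cHX].
   - intros V hV; exact hV. }
 assert (mY : forall y t, P Y y -> P Y (HY (y, t))).
 { intros y t hy. apply (HP Y Y (fun z => HY (z, t)) (fun z => z) HY t); auto.
   - apply (cont_comp _ (prod_open (is_open Y) I_open) _ (fun z => (z, t)) HY); [apply sect_cont|exact cHY].
   - intros V hV; exact hV. }
 exists (fun u => exist _ (f (proj1_sig u)) (fP _ (proj2_sig u))).
 exists (fun v => exist _ (g (proj1_sig v)) (gP _ (proj2_sig v))).
 split; [|split; [|split]].
 - intros V [U [hU eU]]. exists (fun x => U (f x)). split; [apply cf; auto|].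
   intro y. apply (eU (exist _ _ _)).
 - intros V [U [hU eU]]. exists (fun x => U (g x)). split; [apply cg; auto|].
   intro y. apply (eU (exist _ _ _)).
 - exists (fun p => exist _ (HX (proj1_sig (fst p), snd p)) (mX _ _ (proj2_sig (fst p)))).
   split; [|split; intro u; apply sig_eq; simpl; auto].
   intros V [U [hU eU]] p hp. apply eU in hp. simpl in hp.
   destruct (cHX U hU (proj1_sig (fst p), snd p) hp) as [U1 [V1 [hU1 [hV1 [hu [hv hb]]]]]].
   exists (fun y => U1 (proj1_sig y)), V1. split; [exists U1; split; auto; tauto|].
   repeat split; auto. intros q hq1 hq2. apply eU. apply (hb (proj1_sig (fst q), snd q)); auto.
 - exists (fun p => exist _ (HY (proj1_sig (fst p), snd p)) (mY _ _ (proj2_sig (fst p)))).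
   split; [|split; intro u; apply sig_eq; simpl; auto].
   intros V [U [hU eU]] p hp. apply eU in hp. simpl in hp.
   destruct (cHY U hU (proj1_sig (fst p), snd p) hp) as [U1 [V1 [hU1 [hV1 [hu [hv hb]]]]]].
   exists (fun y => U1 (proj1_sig y)), V1. split; [exists U1; split; auto; tauto|].
   repeat split; auto. intros q hq1 hq2. apply eU. apply (hb (proj1_sig (fst q), snd q)); auto.
Qed.

Theorem mainTheorem6 (X Y : Top) :
  homotopy_equivalent X Y ->
  homotopy_equivalent (w X) (w Y) /\ homotopy_equivalent (aw X) (aw Y).
Proof.
  intro h. split; [exact (sub_heq w_set pres_w X Y h) | exact (sub_heq aw_set pres_aw X Y h)].
Qed.
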